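(* Let $T$ be any staircase transformation on $[0,1)$, let $f$ be a $2$-wise constant roof function whose two height values are rationally independent, and let $\phi_t$ be the suspension flow built under $f$ over $T$. Then $\phi_t$ is a rank-one flow.
   Context: Staircase construction: fix a cutting sequence $(r_n)$ and initial interval $J=[0,a)$ (column $C_0$, height $1$). Column $C_n$ is obtained from $C_{n-1}$ (stacked equal-length intervals, the levels) by cutting into $r_n$ equal-width subcolumns, placing $i-1$ spacer intervals of the same width (taken consecutively from $[a,\infty)$) on the $i$-th subcolumn, and stacking the $(i+1)$-th subcolumn on the $i$-th; $T$ maps each non-top level by translation onto the level above; $a$ is chosen so that $J$ plus all spacers has total length $1$. $[0,a)$ is the non-spacer part, $[a,1)$ the spacer part. A $2$-wise constant function: $f$ takes two rationally independent values $p>q>0$, with $f=p$ on the non-spacer part and $f=q$ on the spacer part. Suspension flow: $X=\{(x,y):0\le y<f(x)\}$ with normalized Lebesgue measure $\mu$; points move up at unit speed and a point reaching $(x,f(x))$ jumps to $(T(x),0)$. A measure-preserving flow $\phi_t$ on a probability space $(X,\mathcal B,\mu)$ is rank-one if there exist measurable sets $A_n$, a decreasing sequence of times $t_n$ and an increasing sequence of integers $h_n$ such that: (1) $t_n\to0$; (2) $h_nt_n\to\infty$; (3) $\mu(\phi_{k_1t_n}A_n\cap\phi_{k_2t_n}A_n)=0$ for all distinct $k_1,k_2\in\{0,\dots,h_n-1\}$; (4) $\mu\big(X\setminus\bigcup_{k=0}^{h_n-1}\phi_{kt_n}(A_n)\big)\to0$ as $n\to\infty$. *)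

(* Defs.v *)
From HB Require Import structures.
From mathcomp Require Import all_boot all_order all_algebra.
From mathcomp Require Import all_classical all_reals all_analysis.
Set Implicit Arguments. Unset Strict Implicit. Unset Printing Implicit Defensive.
Import Order.TTheory GRing.Theory Num.Theory.
Import numFieldNormedType.Exports.
Local Open Scope classical_set_scope.
Local Open Scope ring_scope.

Section Staircase.
Variable R : realType.

(* Cutting sequence: [r k] is the number of subcolumns used to build
   column C_{k+1} from column C_k (i.e. r_{k+1} in the paper's notation). *)
Variables (r : nat -> nat) (a : R).

Definition st_width (n : nat) : R := a / (\prod_(k < n) (r k)%:R).

(* left end of the first spacer used when building C_{n+1} from C_n:
   spacers are taken consecutively from [a, oo); step k+1 uses
   'C(r k, 2) = 0 + 1 + ... + (r k - 1) spacers of width st_width k.+1 *)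
Definition st_spacer_start (n : nat) : R :=
  a + \sum_(k < n) st_width k.+1 * ('C(r k, 2))%:R.

(* Column C_n, as the list (bottom to top) of the left endpoints of its levels;
   every level of C_n is [l, l + st_width n). *)
Fixpoint st_column (n : nat) : seq R :=
  match n with
  | 0 => [:: 0]
  | n'.+1 =>
    let L := st_column n' in
    let w := st_width n'.+1 in
    let s := st_spacer_start n' in
    flatten [seq [seq x + i%:R * w | x <- L] ++
                 [seq s + ('C(i, 2) + j)%:R * w | j <- iota 0 i]
            | i <- iota 0 (r n')]
  end.

(* a is chosen so that J = [0,a) plus all spacers has total length 1 *)
Definition st_total_length_one : Prop :=
  (fun N => st_spacer_start N) @ \oo --> (1 : R).

Definition is_staircase_map (T : R -> R) : Prop :=
  forall n j, (j.+1 < size (st_column n))%N ->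
  forall x, nth 0 (st_column n) j <= x < nth 0 (st_column n) j + st_width n ->
    T x = x - nth 0 (st_column n) j + nth 0 (st_column n) j.+1.

End Staircase.

Definition staircase (R : realType) (r : nat -> nat) (a : R) (T : R -> R) : Prop :=
  (forall n, (2 <= r n)%N) /\ st_total_length_one r a /\ is_staircase_map r a T.

(* the 2-wise constant roof: p on the non-spacer part [0,a), q on the spacer part *)
Definition roof2 (R : realType) (a p q : R) (x : R) : R := if x < a then p else q.

Definition rationally_independent (R : realType) (p q : R) : Prop :=
  forall m n : int, m%:~R * p + n%:~R * q = 0 -> m = 0 /\ n = 0.

Definition susp_space (R : realType) (f : R -> R) : set (R * R) :=
  [set z | (0 <= z.1 < 1) /\ (0 <= z.2 < f z.1)].

(* phi_t z = z' for t >= 0 : move up at unit speed, jumping from (x, f x) to (T x, 0) *)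
Definition susp_flow_rel (R : realType) (T : R -> R) (f : R -> R) (t : R)
    (z z' : R * R) : Prop :=
  exists m : nat,
    z'.1 = iter m T z.1 /\
    z'.2 = z.2 + t - \sum_(i < m) f (iter i T z.1) /\
    0 <= z'.2 < f z'.1.

Definition susp_flow_img (R : realType) (T : R -> R) (f : R -> R) (t : R)
    (A : set (R * R)) : set (R * R) :=
  [set z' | exists2 z, A z & susp_flow_rel T f t z z'].

Local Open Scope ereal_scope.
Definition susp_measure (R : realType) (f : R -> R) (B : set (R * R)) : \bar R :=
  ((@lebesgue_measure R \x @lebesgue_measure R) (B `&` susp_space f)) *
  ((fine ((@lebesgue_measure R \x @lebesgue_measure R) (susp_space f)))^-1)%:E.
Local Close Scope ereal_scope.

Definition rank_one_susp_flow (R : realType) (T : R -> R) (f : R -> R) : Prop :=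
  let X := susp_space f in
  let phi := susp_flow_img T f in
  let mu := susp_measure f in
  exists (A : nat -> set (R * R)) (t : nat -> R) (h : nat -> nat),
    (forall n, measurable (A n) /\ A n `<=` X) /\
    (forall n, 0 < t n) /\ (forall n, t n.+1 < t n) /\
    (forall n, (h n < h n.+1)%N) /\
    (forall n k, (k < h n)%N -> measurable (phi (k%:R * t n) (A n))) /\
    t @ \oo --> 0 /\
    (fun n => (h n)%:R * t n) @ \oo --> +oo /\
    (forall n k1 k2, (k1 < h n)%N -> (k2 < h n)%N -> k1 <> k2 ->
       mu (phi (k1%:R * t n) (A n) `&` phi (k2%:R * t n) (A n)) = 0%E) /\
    (fun n => mu (X `\` \bigcup_(k in `I_(h n)) phi (k%:R * t n) (A n)))
      @ \oo --> 0%E.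

(* Main.v *)
Require Import Defs.
From HB Require Import structures.
From mathcomp Require Import all_boot all_order all_algebra.
From mathcomp Require Import all_classical all_reals all_analysis.
From mathcomp Require Import zify ring lra.
Import Order.TTheory GRing.Theory Num.Theory.
Import numFieldNormedType.Exports.
Local Open Scope ring_scope.
Set Implicit Arguments. Unset Strict Implicit. Unset Printing Implicit Defensive.

Section Comb.
Local Open Scope nat_scope.
Variable r : nat -> nat.

Fixpoint cidx (n : nat) : seq nat :=
  match n with
  | 0 => [:: 0]
  | n'.+1 =>
    let L := cidx n' in
    flatten [seq [seq m * r n' + i | m <- L] ++
                 [seq size L * r n' + ('C(i, 2) + j) | j <- iota 0 i]
            | i <- iota 0 (r n')]
  end.

Lemma sumn_iotaS (f : nat -> nat) k :
  sumn [seq f i | i <- iota 0 k.+1] = sumn [seq f i | i <- iota 0 k] + f k.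
Proof. by rewrite -addn1 iotaD map_cat sumn_cat /= addn0. Qed.

Lemma sumn_lin N k : sumn [seq N + i | i <- iota 0 k] = N * k + 'C(k, 2).
Proof.
elim: k => [|k IH]; first by rewrite muln0.
rewrite sumn_iotaS IH binS bin1; lia.
Qed.

Lemma size_cidx n : size (cidx n.+1) = size (cidx n) * r n + 'C(r n, 2).
Proof.
rewrite /= size_flatten /shape -map_comp.
rewrite -sumn_lin; congr sumn; apply: eq_map => i /=.
by rewrite size_cat !size_map size_iota.
Qed.

Lemma bin2_find k c : c < 'C(k, 2) -> exists i j, [/\ i < k, j < i & c = 'C(i, 2) + j].
Proof.
elim: k => [|k IH]; first by rewrite bin0n.
rewrite binS bin1 => hc.
case: (ltnP c 'C(k, 2)) => h.
  by have [i [j [h1 h2 h3]]] := IH h; exists i, j; split => //; lia.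
by exists k, (c - 'C(k, 2)); split => //; lia.
Qed.

Lemma cidx_cover n x : x < size (cidx n) -> x \in cidx n.
Proof.
elim: n x => [|n IH] x; first by case: x.
rewrite size_cidx => hx.
set L := cidx n; set N := size L; set rn := r n.
have rpos : 0 < rn.
  by move: hx; rewrite /rn; case: (r n) => [|//]; rewrite muln0 bin0n.
apply/flattenP.
case: (ltnP x (N * rn)) => h.
  exists ([seq m * rn + (x %% rn) | m <- L] ++
          [seq N * rn + ('C(x %% rn, 2) + j) | j <- iota 0 (x %% rn)]).
    by apply: (map_f (fun i => [seq m * rn + i | m <- L] ++
          [seq N * rn + ('C(i, 2) + j) | j <- iota 0 i])); rewrite mem_iota ltn_pmod.
  rewrite mem_cat; apply/orP; left.
  have -> : x = (x %/ rn) * rn + x %% rn by rewrite -divn_eq.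
  rewrite modnMDl modn_mod.
  apply: (map_f (fun m => m * rn + x %% rn)); apply: IH.
  by rewrite ltn_divLR.
have hc : x - N * rn < 'C(rn, 2).
  move: hx h; rewrite /N /L /rn. lia.
have [i [j [h1 h2 h3]]] := @bin2_find rn (x - N * rn) hc.
exists ([seq m * rn + i | m <- L] ++
          [seq N * rn + ('C(i, 2) + j) | j <- iota 0 i]).
  by apply: (map_f (fun i => [seq m * rn + i | m <- L] ++
          [seq N * rn + ('C(i, 2) + j) | j <- iota 0 i])); rewrite mem_iota.
rewrite mem_cat; apply/orP; right.
have -> : x = N * rn + ('C(i, 2) + j) by lia.
by apply: (map_f (fun j => N * rn + ('C(i, 2) + j))); rewrite mem_iota.
Qed.

Lemma cidx_uniq n : uniq (cidx n).
Proof.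
apply: (@leq_size_uniq _ (iota 0 (size (cidx n)))); first exact: iota_uniq.
  by move=> x; rewrite mem_iota => /andP[_ h]; apply: cidx_cover.
by rewrite size_iota.
Qed.

Lemma cidx_lt n x : x \in cidx n -> x < size (cidx n).
Proof.
have sub : {subset iota 0 (size (cidx n)) <= cidx n}.
  by move=> y; rewrite mem_iota => /andP[_ h]; apply: cidx_cover.
have [_ HE] := @uniq_min_size _ (iota 0 (size (cidx n))) (cidx n) (iota_uniq _ _)
  sub ltac:(by rewrite size_iota).
by rewrite -HE mem_iota.
Qed.

End Comb.

Section R1.
Variable R : realType.
Variables (r : nat -> nat) (a : R).
Hypothesis hr : forall n, (2 <= r n)%N.

Definition P n := (\prod_(k < n) r k)%N.

Lemma P_gt0 n : (0 < P n)%N.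
Proof. rewrite /P prodn_gt0 // => i; have := hr i; lia. Qed.

Lemma w_def n : st_width r a n = a / (P n)%:R.
Proof. by rewrite /st_width /P natr_prod. Qed.

Lemma a_eq n : a = (P n)%:R * st_width r a n.
Proof.
rewrite w_def mulrC -mulrA mulVf ?mulr1 //.
by rewrite pnatr_eq0 -lt0n P_gt0.
Qed.

Lemma w_rec n : st_width r a n = (r n)%:R * st_width r a n.+1.
Proof.
rewrite !w_def /P big_ord_recr /= natrM.
have h1 : ((\prod_(k < n) r k)%:R : R) != 0 by rewrite pnatr_eq0 -lt0n P_gt0.
have h2 : ((r n)%:R : R) != 0 by rewrite pnatr_eq0; have := hr n; lia.
field; by rewrite h1 h2.
Qed.

Lemma s_rec n : st_spacer_start r a n.+1 =
  st_spacer_start r a n + st_width r a n.+1 * ('C(r n, 2))%:R.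
Proof. by rewrite /st_spacer_start big_ord_recr /= addrA. Qed.

Lemma s_eq n : st_spacer_start r a n = (size (cidx r n))%:R * st_width r a n.
Proof.
elim: n => [|n IH].
  by rewrite /st_spacer_start big_ord0 addr0 /= mul1r w_def /P big_ord0 divr1.
rewrite s_rec IH size_cidx w_rec natrD natrM; ring.
Qed.

Lemma col_eq n : st_column r a n = [seq m%:R * st_width r a n | m <- cidx r n].
Proof.
elim: n => [|n IH]; first by rewrite /= mul0r.
rewrite /= IH map_flatten -map_comp; congr flatten; apply: eq_map => i /=.
rewrite map_cat -!map_comp; congr (_ ++ _); apply: eq_map => m /=.
  rewrite (w_rec n) natrD natrM; ring.
rewrite s_eq w_rec !natrD !natrM; ring.
Qed.

End R1.

Section Main.
Local Open Scope classical_set_scope.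
Variable R : realType.
Variables (r : nat -> nat) (a : R) (T : R -> R) (p q : R).
Hypotheses (hr : forall n, (2 <= r n)%N) (hs : st_total_length_one r a)
  (hT : is_staircase_map r a T) (hq : 0 < q) (hpq : q < p).

Local Notation f := (roof2 a p q).
Local Notation w n := (st_width r a n).
Local Notation N n := (size (cidx r n)).
Local Notation l n j := (nth 0 (st_column r a n) j).
Local Notation c n j := (nth 0 (cidx r n) j).
Local Notation s n := (st_spacer_start r a n).

Lemma a_pos : 0 < a.
Proof.
have := cvgr_gt (1 : R) hs (0 : R) ltr01.
case=> M _ HM; have := HM M (leqnn M) => /=.
rewrite s_eq // w_def.
case: (ltrP 0 a) => // ha h; exfalso.
have : (N M)%:R * (a / (P r M)%:R) <= 0.
  by rewrite mulr_ge0_le0 // mulr_le0_ge0 // invr_ge0 ler0n.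
by rewrite leNgt h.
Qed.

Lemma w_pos n : 0 < w n.
Proof. by rewrite w_def divr_gt0 ?a_pos // ltr0n P_gt0. Qed.

Lemma s_le1 n : s n <= 1.
Proof.
have hnd : {homo (fun n => s n) : n m / (n <= m)%N >-> n <= m}.
  apply/nondecreasing_seqP => m; rewrite s_rec.
  by rewrite lerDl mulr_ge0 // ltW // w_pos.
have hc : cvgn (fun n => s n) by exact: (cvgP _ hs).
have := nondecreasing_cvgn_le hnd hc n.
by rewrite (cvg_lim _ hs).
Qed.

Lemma f_ge_q (y : R) : q <= f y.
Proof. rewrite /roof2; have := hpq; case: ifP => _ ? ; lra. Qed.

Lemma f_le_p (y : R) : f y <= p.
Proof. rewrite /roof2; have := hpq; case: ifP => _ ? ; lra. Qed.

Lemma l_eq n j : l n j = (c n j)%:R * w n.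
Proof.
rewrite col_eq //; case: (ltnP j (N n)) => h; first by rewrite (nth_map 0).
by rewrite !nth_default ?size_map // mul0r.
Qed.

Lemma size_col n : size (st_column r a n) = N n.
Proof. by rewrite col_eq // size_map. Qed.

Lemma roof_level n j (y : R) : l n j <= y < l n j + w n -> f y = f (l n j).
Proof.
rewrite l_eq => /andP[h1 h2]; have hw := w_pos n.
set W := w n in h1 h2 hw *.
rewrite /roof2 (a_eq a hr n) -/W.
case: (ltnP (c n j) (P r n)) => hm.
  have e : (c n j)%:R + 1 <= ((P r n)%:R : R) by rewrite natr1 ler_nat.
  have e2 : ((c n j)%:R + 1) * W <= (P r n)%:R * W by rewrite ler_pM2r.
  rewrite !ifT //; nra.
have e : ((P r n)%:R : R) <= (c n j)%:R by rewrite ler_nat.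
have e2 : (P r n)%:R * W <= (c n j)%:R * W by rewrite ler_pM2r.
rewrite !ifF //; apply/negbTE; rewrite -leNgt; nra.
Qed.

Lemma iter_col n (x : R) i : l n 0 <= x < l n 0 + w n -> (i < N n)%N ->
  iter i T x = x - l n 0 + l n i.
Proof.
move=> hx; elim: i => [|i IH] hi; first by rewrite /=; ring.
rewrite iterS IH; last by lia.
have hh : (i.+1 < size (st_column r a n))%N by rewrite size_col.
have hx' : l n i <= x - l n 0 + l n i < l n i + w n.
  by move: hx => /andP[h1 h2]; apply/andP; split; lra.
rewrite (hT hh hx'); ring.
Qed.

Lemma lev_uniq n j1 j2 (x : R) : (j1 < N n)%N -> (j2 < N n)%N ->
  l n j1 <= x < l n j1 + w n -> l n j2 <= x < l n j2 + w n -> j1 = j2.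
Proof.
move=> h1 h2; rewrite !l_eq => /andP[a1 a2] /andP[b1 b2].
have hw := w_pos n.
have k1 : (c n j1)%:R * w n < ((c n j2)%:R + 1) * w n by lra.
have k2 : (c n j2)%:R * w n < ((c n j1)%:R + 1) * w n by lra.
rewrite ltr_pM2r // natr1 ltr_nat in k1.
rewrite ltr_pM2r // natr1 ltr_nat in k2.
have e : c n j1 = c n j2 by lia.
by apply/eqP; rewrite -(nth_uniq 0 h1 h2 (cidx_uniq r n)) e.
Qed.

Lemma cover_lev n (x : R) : 0 <= x < s n -> exists2 j, (j < N n)%N & l n j <= x < l n j + w n.
Proof.
move=> /andP[h1 h2]; have hw := w_pos n.
set m := Num.trunc (x / w n).
have /andP[t1 t2] : (m%:R <= x / w n < m.+1%:R) by apply: truncn_itv; rewrite divr_ge0 // ltW.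
rewrite ler_pdivlMr // in t1; rewrite ltr_pdivrMr // -natr1 in t2.
have hm : (m < N n)%N.
  rewrite -(ltr_nat R) -(ltr_pM2r hw) -s_eq //; lra.
have mi : m \in cidx r n by apply: cidx_cover.
exists (index m (cidx r n)); first by rewrite index_mem.
by rewrite l_eq nth_index //; apply/andP; split; lra.
Qed.


Definition g n j := f (l n j).
Definition S n j := \sum_(0 <= i < j) g n i.
Definition H n := S n (N n).
Definition Aset n (t : R) : set (R * R) :=
  [set z | l n 0 <= z.1 < l n 0 + w n /\ 0 <= z.2 < t].
Definition Eset n (t : R) (k : nat) : set (R * R) :=
  [set z | exists2 j, (j < N n)%N & [/\ l n j <= z.1 < l n j + w n,
     0 <= z.2 < g n j & k%:R * t <= z.2 + S n j < k%:R * t + t]].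

Lemma g_ge_q n j : q <= g n j. Proof. exact: f_ge_q. Qed.
Lemma g_le_p n j : g n j <= p. Proof. exact: f_le_p. Qed.

Lemma S_ge0 n j : 0 <= S n j.
Proof. apply: sumr_ge0 => i _; have := g_ge_q n i; have := hq; lra. Qed.

Lemma S_step n j : S n j.+1 = S n j + g n j.
Proof. by rewrite /S big_nat_recr. Qed.

Lemma S_mono n j m : (j <= m)%N -> S n j <= S n m.
Proof.
move=> hjm; rewrite /S (big_cat_nat (leq0n j) hjm) /= lerDl.
apply: sumr_ge0 => i _; have := g_ge_q n i; have := hq; lra.
Qed.

Lemma H_lb n : (N n)%:R * q <= H n.
Proof.
have e : \sum_(0 <= i < N n) q = (N n)%:R * q by rewrite sumr_const_nat subn0 mulr_natl.
rewrite -e /H /S; apply: ler_sum => i _; apply: g_ge_q.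
Qed.

Lemma H_ub n : H n <= (N n)%:R * p.
Proof.
have e : \sum_(0 <= i < N n) p = (N n)%:R * p by rewrite sumr_const_nat subn0 mulr_natl.
rewrite -e /H /S; apply: ler_sum => i _; apply: g_le_p.
Qed.

Lemma sum_iter n (x : R) m : l n 0 <= x < l n 0 + w n -> (m <= N n)%N ->
  \sum_(0 <= i < m) f (iter i T x) = S n m.
Proof.
move=> hx hm; rewrite /S big_nat_cond [RHS]big_nat_cond.
apply: eq_bigr => i /andP[/andP[_ hi] _].
rewrite (iter_col (n:=n)) //; last by lia.
rewrite /g; apply: roof_level.
by move: hx => /andP[h1 h2]; apply/andP; split; lra.
Qed.

Lemma f_ge0 (y : R) : 0 <= f y.
Proof. have := f_ge_q y; have := hq; lra. Qed.

Lemma img_eq n (t : R) k : 0 < t -> k.+1%:R * t <= H n ->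
  susp_flow_img T f (k%:R * t) (Aset n t) = Eset n t k.
Proof.
move=> ht hk; rewrite -natr1 mulrDl mul1r in hk.
apply/seteqP; split.
- move=> [x' y'] [[x y] [/= hx hy] [m [/= e1 [e2 e3]]]].
  rewrite -(big_mkord xpredT (fun i => f (iter i T x))) in e2.
  case: (ltnP m (N n)) => hm.
  + exists m => //.
    have it := iter_col hx hm; rewrite it in e1.
    rewrite (sum_iter hx (ltnW hm)) in e2.
    have hl : l n m <= x - l n 0 + l n m < l n m + w n.
      by move: hx => /andP[h1 h2]; apply/andP; split; lra.
    have gx : f x' = g n m by rewrite e1 /g; apply: roof_level.
    rewrite gx in e3; split => //; first by rewrite e1.
    rewrite /=; move: hy => /andP[h1 h2]; apply/andP; split; lra.
  + exfalso.
    have hsum : H n <= \sum_(0 <= i < m) f (iter i T x).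
      rewrite (big_cat_nat (leq0n (N n)) hm) /= (sum_iter hx (leqnn _)) lerDl.
      by apply: sumr_ge0 => i _; apply: f_ge0.
    move: hy e3 => /andP[h1 h2] /andP[h3 h4]; lra.
- move=> [x' y'] [j hj [/= h1 h2 h3]].
  have hx : l n 0 <= x' - l n j + l n 0 < l n 0 + w n.
    by move: h1 => /andP[u1 u2]; apply/andP; split; lra.
  exists (x' - l n j + l n 0, y' + S n j - k%:R * t).
    split => //=; move: h3 => /andP[u1 u2]; apply/andP; split; lra.
  exists j => /=; split; [|split].
  + rewrite (iter_col (n:=n)) //; ring.
  + rewrite -(big_mkord xpredT (fun i => f (iter i T _))) (sum_iter (n:=n) (m:=j) hx (ltnW hj)); ring.
  + by rewrite (roof_level h1).
Qed.

Lemma Eset_meas n (t : R) k : measurable (Eset n t k).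
Proof.
have -> : Eset n t k = \bigcup_(j in `I_(N n))
    (`[l n j, l n j + w n[%classic `*`
      (`[0, g n j[%classic `&` `[k%:R * t - S n j, k%:R * t + t - S n j[%classic)).
  apply/seteqP; split.
    move=> [x y] [j hj [/= h1 h2 h3]]; exists j => //=.
    rewrite !in_itv /=; split => //; split => //.
    by move: h3 => /andP[u1 u2]; apply/andP; split; lra.
  move=> [x y] [j hj] /=; rewrite !in_itv /= => -[h1 [h2 h3]].
  exists j => //; split => //.
  by rewrite /=; move: h3 => /andP[u1 u2]; apply/andP; split; lra.
apply: bigcup_measurable => j _; apply: measurableX; first exact: measurable_itv.
by apply: measurableI; exact: measurable_itv.
Qed.

Lemma slot_uniq (t u : R) k1 k2 : 0 < t ->
  k1%:R * t <= u < k1%:R * t + t -> k2%:R * t <= u < k2%:R * t + t -> k1 = k2.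
Proof.
move=> ht /andP[a1 a2] /andP[b1 b2].
case: (ltngtP k1 k2) => // h; exfalso.
  have : k1.+1%:R * t <= k2%:R * t by rewrite ler_pM2r // ler_nat.
  rewrite -natr1 mulrDl mul1r; lra.
have : k2.+1%:R * t <= k1%:R * t by rewrite ler_pM2r // ler_nat.
rewrite -natr1 mulrDl mul1r; lra.
Qed.

Lemma Eset_disj n (t : R) k1 k2 : 0 < t -> k1 <> k2 -> Eset n t k1 `&` Eset n t k2 = set0.
Proof.
move=> ht hk; apply/seteqP; split => // -[x y] [[j1 hj1 [a1 a2 a3]] [j2 hj2 [b1 b2 b3]]].
have e := lev_uniq hj1 hj2 a1 b1; subst j2.
by apply: hk; apply: (slot_uniq ht a3 b3).
Qed.

Lemma cover_E n (t : R) h (z : R * R) : 0 < t -> h%:R * t = H n ->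
  susp_space f z -> z.1 < s n -> exists2 k, (k < h)%N & Eset n t k z.
Proof.
case: z => x y ht hH [/= /andP[hx0 hx1] /andP[hy0 hy1]] hxs.
have [j hj hl] := cover_lev (x := x) (n := n) (ltac:(by apply/andP; split)).
rewrite (roof_level hl) -/(g n j) in hy1.
set u := y + S n j.
have hu : 0 <= u by have := S_ge0 n j; rewrite /u; lra.
set k := Num.trunc (u / t).
have /andP[t1 t2] : (k%:R <= u / t < k.+1%:R) by apply: truncn_itv; rewrite divr_ge0 // ltW.
rewrite ler_pdivlMr // in t1; rewrite ltr_pdivrMr // -natr1 in t2.
have hk : (k < h)%N.
  have e1 : u < H n.
    have := S_mono n hj; rewrite S_step /H /u; lra.
  rewrite -(ltr_nat R) -(ltr_pM2r ht) hH; lra.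
exists k => //; exists j => //; split => //=; first by apply/andP.
by rewrite -/u; apply/andP; split; lra.
Qed.


Local Notation lam2 := (@lebesgue_measure R \x @lebesgue_measure R)%E.
Local Notation X := (susp_space f).
Definition cX : R := (fine (lam2 X))^-1.

Lemma X_meas : measurable X.
Proof.
have -> : X = ((`[0, 1%R[%classic `&` `]-oo, a[%classic) `*` `[0, p[%classic) `|`
              ((`[0, 1%R[%classic `&` `[a, +oo[%classic) `*` `[0, q[%classic).
  apply/seteqP; split.
    move=> [x y] [/= h1 /andP[h2 h3]]; rewrite /roof2 in h3.
    case: ifP h3 => hx h3.
      by left; rewrite /= !in_itv /= h1 hx h2 h3.
    by right; rewrite /= !in_itv /= h1 h2 h3 andbT leNgt hx.
  move=> [x y] [] /=; rewrite !in_itv /= => -[[h1 h2] /andP[h3 h4]];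
    split => //; rewrite /roof2.
    by rewrite /= h2 h3 h4.
  rewrite /= andbT in h2; have -> : (x < a) = false by rewrite ltNge h2.
  by rewrite h3 h4.
apply: measurableU; apply: measurableX; try apply: measurableI; exact: measurable_itv.
Qed.

Lemma cX_ge0 : 0 <= cX.
Proof. by rewrite invr_ge0 fine_ge0 // measure_ge0. Qed.

Lemma leb_itv1 (u : R) : u <= 1 -> (lebesgue_measure (`[u, 1%R[%classic : set R) <= ((1 - u)%R)%:E)%E.
Proof.
move=> h; rewrite lebesgue_measure_itv /=; case: ifP => _.
  by rewrite -EFinD.
by rewrite lee_fin subr_ge0.
Qed.

Lemma leb_itv2 : (lebesgue_measure (`[0%R, p[%classic : set R) <= p%:E)%E.
Proof.
rewrite lebesgue_measure_itv /=; case: ifP => _.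
  by rewrite -EFinD subr0.
by rewrite lee_fin; have := hq; have := hpq; lra.
Qed.

Lemma rect_meas (u : R) : (lam2 (`[u, 1%R[%classic `*` `[0%R, p%R[%classic) <= ((1 - u) * p)%R%:E)%E
  \/ u > 1.
Proof.
case: (lerP u 1) => hu; last by right.
left; rewrite product_measure1E; try exact: measurable_itv.
rewrite EFinM; apply: lee_pmul; try exact: measure_ge0.
  exact: leb_itv1.
exact: leb_itv2.
Qed.

Lemma mu_cover n (t : R) h : 0 < t -> h%:R * t = H n ->
  (susp_measure f (X `\` \bigcup_(k in `I_h) susp_flow_img T f (k%:R * t)%R (Aset n t))
    <= ((1 - s n) * p * cX)%R%:E)%E.
Proof.
move=> ht hH.
rewrite (eq_bigcupr (G := fun k => Eset n t k)); last first.
  move=> k hk; apply: img_eq => //; rewrite -hH ler_pM2r // ler_nat; exact: hk.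
have hU : measurable (\bigcup_(k in `I_h) Eset n t k).
  by apply: bigcup_measurable => k _; apply: Eset_meas.
rewrite /susp_measure -/cX EFinM; apply: lee_pmul => //.
  by rewrite lee_fin cX_ge0.
have [hr1|h1] := rect_meas (s n); last by exfalso; have := s_le1 n; lra.
apply: le_trans hr1; apply: le_measure; rewrite ?inE.
- by apply: measurableI => //; [apply: measurableD => //; exact: X_meas | exact: X_meas].
- by apply: measurableX; exact: measurable_itv.
move=> [x y] [[hX hnU] _].
have hxs : s n <= x.
  rewrite leNgt; apply/negP => hxs; apply: hnU.
  have [k hk hE] := cover_E ht hH hX hxs.
  by exists k.
case: hX => /= /andP[h1 h2] /andP[h3 h4].
rewrite /= !in_itv /= hxs h2 h3 /=.
by have := f_le_p x; lra.
Qed.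

Lemma mu_ge0 B : (0 <= susp_measure f B)%E.
Proof. by rewrite /susp_measure mule_ge0 // ?measure_ge0 // lee_fin cX_ge0. Qed.

Lemma N_ge n : (n.+1 <= N n)%N.
Proof.
elim: n => [//|n IH]; rewrite size_cidx; have := hr n.
move: (r n) => k hk; have : (N n * 2 <= N n * k)%N by rewrite leq_mul2l hk orbT.
lia.
Qed.

Lemma N_mono n : (N n <= N n.+1)%N.
Proof.
rewrite size_cidx; have := hr n; move: (r n) => k hk.
have : (N n <= N n * k)%N by rewrite leq_pmulr //; lia.
lia.
Qed.

Lemma H_pos n : 0 < H n.
Proof.
have := H_lb n; have : (0 : R) < (N n)%:R by rewrite ltr0n; have := N_ge n; lia.
have := hq; nra.
Qed.

Lemma l0_sub n : 0 <= l n 0 /\ l n 0 + w n <= 1.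
Proof.
have hw := w_pos n.
rewrite l_eq; split; first by rewrite mulr_ge0 // ltW.
have hN := N_ge n.
have hc : (c n 0 < N n)%N by apply: cidx_lt; apply: mem_nth; exact: leq_trans (ltn0Sn n) hN.
have e : ((c n 0)%:R + 1) * w n <= (N n)%:R * w n.
  by rewrite ler_pM2r // natr1 ler_nat.
have := s_le1 n; rewrite s_eq //; lra.
Qed.

Lemma rank_one : rank_one_susp_flow T (roof2 a p q).
Proof.
have hq' := hq; have hpq' := hpq.
set B := (Num.bound (p / q)).+2.
have hB : p < B%:R * q.
  have h0 : p / q < B%:R.
    apply: (lt_le_trans (archi_boundP _)); first by rewrite divr_ge0 // ltW //; lra.
    by rewrite ler_nat /B; lia.
  by rewrite ltr_pdivrMr // in h0.
have hB2 : (2 <= B)%N by [].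
pose h := fun n => (N n * B ^ n.+1)%N.
pose t := fun n => H n / (h n)%:R.
have hh : forall n, (0 : R) < (h n)%:R.
  move=> n; rewrite ltr0n /h muln_gt0 expn_gt0; have := N_ge n; lia.
have ht : forall n, 0 < t n by move=> n; rewrite /t divr_gt0 // H_pos.
have hht : forall n, (h n)%:R * t n = H n.
  by move=> n; rewrite /t mulrC divfK // gt_eqF.
have tX : forall n, q <= t n * (B ^ n.+1)%:R <= p.
  move=> n; have hNp : (0 : R) < (N n)%:R by rewrite ltr0n; have := N_ge n; lia.
  have e : t n * (B ^ n.+1)%:R = H n / (N n)%:R.
    rewrite /t /h natrM; field; apply/andP; split; rewrite gt_eqF //.
    by rewrite ltr0n expn_gt0.
  rewrite e; apply/andP; split.
    by rewrite ler_pdivlMr // mulrC H_lb.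
  by rewrite ler_pdivrMr // mulrC H_ub.
have hk : forall n k, (k < h n)%N -> k.+1%:R * t n <= H n.
  by move=> n k hk; rewrite -hht ler_pM2r // ler_nat.
exists (fun n => Aset n (t n)), t, h.
split.
  move=> n; split.
    have -> : Aset n (t n) = `[l n 0, l n 0 + w n[%classic `*` `[0, t n[%classic.
      by apply/seteqP; split => -[x y]; rewrite /Aset /= !in_itv /=.
    by apply: measurableX; exact: measurable_itv.
  move=> [x y] [/= /andP[h1 h2] /andP[h3 h4]].
  have [l1 l2] := l0_sub n.
  split; rewrite /=; apply/andP; split; try lra.
  have := f_ge_q x; have /andP[u1 u2] := tX n.
  have eB : (B%:R : R) <= (B ^ n.+1)%:R by rewrite ler_nat expnS leq_pmulr // expn_gt0.
  have e1 : t n * B%:R <= t n * (B ^ n.+1)%:R by rewrite ler_pM2l.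
  have e2 : t n * B%:R < q * B%:R by lra.
  have hBp : (0 : R) < B%:R by rewrite ltr0n.
  rewrite ltr_pM2r // in e2; lra.
split; first exact: ht.
split.
  move=> n; have /andP[u1 u2] := tX n; have /andP[v1 v2] := tX n.+1.
  have eX : ((B ^ n.+2)%N%:R : R) = B%:R * (B ^ n.+1)%:R by rewrite expnS natrM.
  rewrite eX in v1 v2.
  have hX : (0 : R) < (B ^ n.+1)%:R by rewrite ltr0n expn_gt0.
  have hBp : (0 : R) < B%:R by rewrite ltr0n.
  have k1 : t n.+1 * (B%:R * (B ^ n.+1)%:R) < t n * (B%:R * (B ^ n.+1)%:R) by nra.
  by rewrite ltr_pM2r ?mulr_gt0 // in k1.
split.
  move=> n; rewrite /h (expnS B n.+1); have := N_mono n; have := N_ge n; have := hB2.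
  have : (0 < B ^ n.+1)%N by rewrite expn_gt0.
  move: (B ^ n.+1)%N (N n) (N n.+1) => X N1 N2 hX hb h1 h2; rewrite mulnA ltn_pmul2r //; apply: (@leq_trans (N2 * 2)); [lia | by rewrite leq_mul2l hb orbT].
split.
  by move=> n k hkn; rewrite img_eq //; [apply: Eset_meas | apply: hk].
split.
  apply: (@squeeze_cvgr _ _ _ _ (fun=> 0) (fun n => p * harmonic n)).
  - apply: nearW => n; rewrite (ltW (ht n)) /=.
    have /andP[_ u2] := tX n.
    have e1 : (n.+1%:R : R) <= (B ^ n.+1)%:R.
      by rewrite ler_nat; apply: ltnW; apply: ltn_expl.
    have hn : (0 : R) < n.+1%:R by rewrite ltr0n.

    have e2 : t n * n.+1%:R <= t n * (B ^ n.+1)%:R by rewrite ler_pM2l.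
    rewrite ler_pdivlMr //; lra.
  - exact: cvg_cst.
  - rewrite -(mulr0 p); apply: cvgMr; exact: cvg_harmonic.
split.
  have -> : (fun n => (h n)%:R * t n) = H by apply: funext => n; apply: hht.
  apply/cvgryPge => A.
  apply: filterS (nbhs_infty_ger (A / q)) => n hn.
  have := H_lb n; have := N_ge n => hN.
  have : (n.+1%:R : R) <= (N n)%:R by rewrite ler_nat.
  rewrite ler_pdivrMr // in hn; rewrite -natr1; nra.
split.
  move=> n k1 k2 h1 h2 hne.
  rewrite !img_eq //; try exact: hk.
  by rewrite Eset_disj // /susp_measure set0I measure0 mul0e.
apply: (squeeze_cvge (f := fun=> 0%E)).
- apply: nearW => n; apply/andP; split; first by rewrite /susp_measure mule_ge0 // ?measure_ge0 // lee_fin cX_ge0.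
  exact: (mu_cover (ht n) (hht n)).
- exact: cvg_cst.
- apply: cvg_EFin; first by apply: nearW.
  have : (fun n => 1 - s n) @ \oo --> (0 : R).
    rewrite -(subrr (1 : R)); apply: cvgB; [exact: cvg_cst | exact: hs].
  move=> h0.
  have key : (fun n => (1 - s n) * p * cX) @ \oo --> (0 : R).
    have -> : (0 : R) = 0 * p * cX by rewrite !mul0r.
    by apply: cvgMl; apply: cvgMl.
  exact: key.
Qed.

End Main.

Theorem lemma6p4 (R : realType) (r : nat -> nat) (a : R) (T : R -> R) (p q : R) :
  staircase r a T ->
  q > 0 -> p > q -> rationally_independent p q ->
  rank_one_susp_flow T (roof2 a p q).
Proof.
move=> [hr [hs hT]] hq hpq _.
exact: (rank_one hr hs hT hq hpq).
Qed.
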